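(* In the setting of the context, for each white vertex $v\in\mathcal{V}_L^W$ define $$a_{v,\sigma}=\sum_{u\in R(v)}\Big(\sum_{j=1}^{N(v\to u)}(-1)^{|(v\to u)_j|-1}\Big)c_{u,\sigma},$$ where $(v\to u)_1,\dots,(v\to u)_{N(v\to u)}$ are the distinct directed paths from $v$ to $u$ and $|(v\to u)_j|$ is the number of vertices on the path. Then $\{a_{v,\sigma}^\dagger,b_{l,\sigma}\}=0$ for all $v\in\mathcal{V}_L^W$ and all $l=1,\dots,L$, $\{c^\dagger_{u,\sigma},a_{v,\sigma}\}=\delta_{u,v}$ for $u,v\in\mathcal{V}_L^W$, and the single-electron states $a^\dagger_{v,\sigma}\Phi_0$, $v\in\mathcal{V}_L^W$, form a basis of the zero-energy eigenspace of $H_{\mathrm{hop}}$ in the single-electron, spin-$\sigma$ sector; in particular $|\mathcal{V}_L^W|=|\mathcal{V}_L|-L$.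
   Context: Construction. Let $G_l=(V_l,E_l)$, $l=1,\dots,L$, be complete graphs with $|V_l|\ge 2$. In each $V_l$ one vertex $v_l^0$ is painted black, the others white. Set $\mathcal{G}_1=G_1$. For $l=2,\dots,L$: choose an integer $z_l$ with $0<z_l\le |V_l|-1$, choose $z_l$ white vertices of $V_l$ and identify each with a vertex (black or white; distinct with distinct) of $\mathcal{V}_{l-1}$; $\mathcal{V}_l=\mathcal{V}_{l-1}\cup V_l$ with these identifications and $\mathcal{E}_l=\mathcal{E}_{l-1}\cup E_l$ (edges joining the same two vertices merged). A white vertex identified with a black one becomes black; two identified white vertices stay white; $v_l^0$ is never identified with an earlier vertex. The black vertices of $\mathcal{G}_L$ are exactly $v_1^0,\dots,v_L^0$; $\mathcal{V}_L^W$ denotes the set of white vertices; $V_l$ is regarded as a subset of $\mathcal{V}_L$. Directed graph: the directed edge set is $\vec{\mathcal{E}}_L=\bigcup_{l=1}^L\{(v,v_l^0): v\in V_l\setminus\{v_l^0\}\}$ (with the identifications above). A directed path from $v$ to $u$ is a sequence $(v_0,\dots,v_k)$ with $v_0=v$, $v_k=u$, $(v_{j-1},v_j)\in\vec{\mathcal{E}}_L$; the trivial sequence $(v)$ counts as a path from $v$ to $v$. For $v\in\mathcal{V}_L^W$, $R(v)$ is the set of vertices reachable from $v$ by directed paths (including $v$) and $N(v\to u)$ is the number of directed paths from $v$ to $u$. Fermions $c_{v,\sigma}$ on $\mathcal{V}_L$ satisfy the canonical anticommutation relations; $\Phi_0$ is the vacuum; $b_{l,\sigma}=\sum_{v\in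 V_l}c_{v,\sigma}$; $H_{\mathrm{hop}}=t\sum_{l=1}^L\sum_\sigma b_{l,\sigma}^\dagger b_{l,\sigma}$ with $t>0$. *)

(* Defs.v *)
From mathcomp Require Import all_boot all_order all_algebra.
Import Order.TTheory GRing.Theory Num.Theory.
Set Implicit Arguments.
Unset Strict Implicit.
Unset Printing Implicit Defensive.
Local Open Scope ring_scope.

(* The final vertex set V_L is a finite type V.  Clique l (0-based, l : 'I_L,
   corresponding to the paper's l+1) has vertex set Vl l (a subset of V after
   identifications) and black vertex bl l. *)
Definition glued_cliques (V : finType) (L : nat)
    (Vl : 'I_L -> {set V}) (bl : 'I_L -> V) : Prop :=
  [/\ (0 < L)%N,
      (forall l, (2 <= #|Vl l|)%N /\ bl l \in Vl l),
      (forall v, exists l, v \in Vl l),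
      (* v_l^0 is never identified with an earlier vertex *)
      (forall l k : 'I_L, (k < l)%N -> bl l \notin Vl k) &
      (* z_l > 0 : V_l shares at least one vertex with V_{l-1} = U_{k<l} V_k *)
      (forall l : 'I_L, (0 < l)%N ->
          exists2 k : 'I_L, (k < l)%N & Vl l :&: Vl k != set0)].

Definition white (V : finType) (L : nat) (bl : 'I_L -> V) : {set V} :=
  [set v | [forall l, v != bl l]].

Definition dedge (V : finType) (L : nat) (Vl : 'I_L -> {set V})
    (bl : 'I_L -> V) : rel V :=
  fun v w => [exists l, [&& w == bl l, v \in Vl l & v != bl l]].

Definition reach (V : finType) (L : nat) (Vl : 'I_L -> {set V}) (bl : 'I_L -> V) (v : V) : {set V} :=
  [set u | connect (@dedge V L Vl bl) v u].

(* sum over directed paths (v = v_0, s_1, ..., s_k = u) of (-1)^(#vertices - 1);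
   the path is v :: s with s a k-tuple.  The digraph is acyclic (edges strictly
   increase the black index), so every directed path has < #|V| edges. *)
Definition pathcoef (V : finType) (L : nat) (Vl : 'I_L -> {set V}) (bl : 'I_L -> V) (v u : V) : int :=
  \sum_(k < #|V|)
     \sum_(s : k.-tuple V | path (@dedge V L Vl bl) v s && (last v s == u))
        (-1) ^+ k.

(* modes (vertex, spin); Fock space = functions on occupation sets *)
Notation fock C V := {ffun {set (V * bool)} -> C^o}.

Definition jwsign (C : numClosedFieldType) (V : finType)
    (x : V * bool) (S : {set V * bool}) : C :=
  (-1) ^+ #|[set y in S | (enum_rank y < enum_rank x)%N]|.

Definition cann (C : numClosedFieldType) (V : finType) (x : V * bool) (psi : fock C V) : fock C V :=
  [ffun S : {set V * bool} => if x \in S then 0 else @jwsign C V x S * psi (x |: S)].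

Definition ccre (C : numClosedFieldType) (V : finType) (x : V * bool) (psi : fock C V) : fock C V :=
  [ffun S : {set V * bool} => if x \in S then @jwsign C V x (S :\ x) * psi (S :\ x) else 0].

Definition vac (C : numClosedFieldType) (V : finType) : fock C V := [ffun S : {set V * bool} => (S == set0)%:R].

Definition bann (C : numClosedFieldType) (V : finType) (L : nat) (Vl : 'I_L -> {set V}) (l : 'I_L) (s : bool)
    (psi : fock C V) : fock C V :=
  \sum_(v in Vl l) @cann C V (v, s) psi.

Definition bcre (C : numClosedFieldType) (V : finType) (L : nat) (Vl : 'I_L -> {set V}) (l : 'I_L) (s : bool)
    (psi : fock C V) : fock C V :=
  \sum_(v in Vl l) @ccre C V (v, s) psi.

Definition aann (C : numClosedFieldType) (V : finType) (L : nat) (Vl : 'I_L -> {set V}) (bl : 'I_L -> V) (v : V) (s : bool) (psi : fock C V) : fock C V :=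
  \sum_(u in @reach V L Vl bl v)
     ((@pathcoef V L Vl bl v u)%:~R : C) *: @cann C V (u, s) psi.

Definition acre (C : numClosedFieldType) (V : finType) (L : nat) (Vl : 'I_L -> {set V}) (bl : 'I_L -> V) (v : V) (s : bool) (psi : fock C V) : fock C V :=
  \sum_(u in @reach V L Vl bl v)
     (((@pathcoef V L Vl bl v u)%:~R : C)^*) *: @ccre C V (u, s) psi.

Definition hop (C : numClosedFieldType) (V : finType) (L : nat) (Vl : 'I_L -> {set V}) (t : C) (psi : fock C V) : fock C V :=
  t *: \sum_(l < L) \sum_(s : bool) @bcre C V L Vl l s (@bann C V L Vl l s psi).

Definition anticomm (C : numClosedFieldType) (V : finType) (A B : fock C V -> fock C V) (psi : fock C V) : fock C V :=
  A (B psi) + B (A psi).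

Definition single_sector (C : numClosedFieldType) (V : finType) (s : bool) (psi : fock C V) : Prop :=
  forall S, psi S != 0 -> exists u, S = [set (u, s)].

(* Main.v *)
Require Import Defs.
From mathcomp Require Import all_boot all_order all_algebra ring zify.
Import Order.TTheory GRing.Theory Num.Theory.
Local Open Scope ring_scope.
Set Implicit Arguments.
Unset Strict Implicit.

Lemma sign_sq (C : numClosedFieldType) (n : nat) : ((-1) ^+ n * (-1) ^+ n : C) = 1.
Proof. by rewrite -exprD addnn -mul2n exprM expr2 mulrNN mulr1 expr1n. Qed.

Lemma jw_sq (C : numClosedFieldType) (V : finType) (x : V * bool) (S : {set V * bool}) : jwsign C x S * jwsign C x S = 1.
Proof. exact: sign_sq. Qed.

Lemma jwU1 (C : numClosedFieldType) (V : finType) (x y : V * bool) (S : {set V * bool}) : y \notin S ->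
  jwsign C x (y |: S) = (-1) ^+ (enum_rank y < enum_rank x)%N * jwsign C x S.
Proof.
move=> yS; rewrite /jwsign -exprD; congr (_ ^+ _).
case h: (enum_rank y < enum_rank x)%N.
  have -> : [set z in y |: S | (enum_rank z < enum_rank x)%N] =
     y |: [set z in S | (enum_rank z < enum_rank x)%N].
    apply/setP => z; rewrite !inE; case: eqP => [->|_] //=; by rewrite h.
  by rewrite cardsU1 inE (negbTE yS).
have -> : [set z in y |: S | (enum_rank z < enum_rank x)%N] =
     [set z in S | (enum_rank z < enum_rank x)%N].
  apply/setP => z; rewrite !inE; case: eqP => [->|_] //=; by rewrite h (negbTE yS).
by [].
Qed.

Lemma jw0 (C : numClosedFieldType) (V : finType) x : jwsign C x (set0 : {set V * bool}) = 1.
Proof.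
rewrite /jwsign; have -> : [set z in (set0 : {set V * bool}) | (enum_rank z < enum_rank x)%N] = set0.
  by apply/setP => z; rewrite !inE.
by rewrite cards0 expr0.
Qed.

Lemma car (C : numClosedFieldType) (V : finType) x y (psi : fock C V) :
  ccre x (cann y psi) + cann y (ccre x psi) = (x == y)%:R *: psi.
Proof.
apply/ffunP => S; rewrite !ffunE.
have [<-|nxy] := eqP.
  rewrite scale1r.
  case xS: (x \in S).
    rewrite !inE eqxx /= mulrA jw_sq mul1r addr0.
    by rewrite setD1K.
  rewrite setU11 /= add0r mulrA.
  have -> : (x |: S) :\ x = S by rewrite setU1K ?xS.
  by rewrite jw_sq mul1r.
rewrite scale0r.
have nxy1 : (x == y) = false by apply/eqP.
have nyx1 : (y == x) = false by rewrite eq_sym.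
case xS: (x \in S); case yS: (y \in S); rewrite ?ffunE ?inE ?yS ?xS ?andbF ?andbT ?nxy1 ?nyx1 //=. all: try (by rewrite ?mulr0 ?addr0 ?add0r).
have eS : (y |: S) :\ x = y |: (S :\ x).
  by apply/setP => z; rewrite !inE; case: eqP => // ->; rewrite nxy1.
rewrite eS.
have -> : jwsign C y S = (-1) ^+ (enum_rank x < enum_rank y)%N * jwsign C y (S :\ x).
  by rewrite -jwU1 ?setD11 // setD1K.
rewrite jwU1 ?inE ?eqxx ?yS ?andbF //.
have hne : enum_rank x != enum_rank y by rewrite (inj_eq enum_rank_inj) nxy1.
case: (ltngtP (enum_rank x) (enum_rank y)) => h; last by rewrite (ord_inj h) eqxx in hne.
+ rewrite /= ?expr1 ?expr0; ring.
+ rewrite /= ?expr1 ?expr0; ring.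
Qed.

Lemma cannD (C : numClosedFieldType) (V : finType) x (p q : fock C V) :
  cann x (p + q) = cann x p + cann x q.
Proof. by apply/ffunP => S; rewrite !ffunE; case: ifP; rewrite ?addr0 ?mulrDr. Qed.
Lemma cannZ (C : numClosedFieldType) (V : finType) x (a : C) (p : fock C V) :
  cann x (a *: p) = a *: cann x p.
Proof. by apply/ffunP => S; rewrite !ffunE; case: ifP; rewrite ?scaler0 // scalerAr. Qed.
Lemma cann0 (C : numClosedFieldType) (V : finType) x : cann x (0 : fock C V) = 0.
Proof. by apply/ffunP => S; rewrite !ffunE; case: ifP; rewrite ?mulr0. Qed.
Lemma ccreD (C : numClosedFieldType) (V : finType) x (p q : fock C V) :
  ccre x (p + q) = ccre x p + ccre x q.
Proof. by apply/ffunP => S; rewrite !ffunE; case: ifP; rewrite ?addr0 ?mulrDr. Qed.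
Lemma ccreZ (C : numClosedFieldType) (V : finType) x (a : C) (p : fock C V) :
  ccre x (a *: p) = a *: ccre x p.
Proof. by apply/ffunP => S; rewrite !ffunE; case: ifP; rewrite ?scaler0 // scalerAr. Qed.
Lemma ccre0 (C : numClosedFieldType) (V : finType) x : ccre x (0 : fock C V) = 0.
Proof. by apply/ffunP => S; rewrite !ffunE; case: ifP; rewrite ?mulr0. Qed.

Lemma cann_sum (C : numClosedFieldType) (V : finType) x (I : Type) (r : seq I) (P : pred I)
  (F : I -> fock C V) : cann x (\sum_(i <- r | P i) F i) = \sum_(i <- r | P i) cann x (F i).
Proof. exact: (big_morph _ (cannD x) (cann0 C x)). Qed.
Lemma ccre_sum (C : numClosedFieldType) (V : finType) x (I : Type) (r : seq I) (P : pred I)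
  (F : I -> fock C V) : ccre x (\sum_(i <- r | P i) F i) = \sum_(i <- r | P i) ccre x (F i).
Proof. exact: (big_morph _ (ccreD x) (ccre0 C x)). Qed.

Lemma cann_vac (C : numClosedFieldType) (V : finType) x : cann x (vac C V) = 0.
Proof.
apply/ffunP => S; rewrite !ffunE; case: ifP => // _.
have -> : (x |: S == set0) = false by apply/negbTE/set0Pn; exists x; rewrite setU11.
by rewrite mulr0.
Qed.

Lemma setD1_eq0 (T : finType) (x : T) (S : {set T}) : x \in S -> (S :\ x == set0) = (S == [set x]).
Proof.
move=> xS; apply/eqP/eqP => [E|->]; last by rewrite setDv.
apply/setP => y; rewrite inE; case: (y =P x) => [->//|/eqP ne].
by have := congr1 (fun A : {set T} => y \in A) E; rewrite !inE ne /= => ->.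
Qed.

Lemma e_val (C : numClosedFieldType) (V : finType) x S :
  ccre x (vac C V) S = (S == [set x])%:R.
Proof.
rewrite !ffunE; case: ifP => xS; last by case: eqP => // E; rewrite E set11 in xS.
rewrite -(setD1_eq0 xS); case: eqP => [->|_]; last by rewrite mulr0.
by rewrite jw0 mulr1.
Qed.

Lemma cann_e (C : numClosedFieldType) (V : finType) x y :
  cann y (ccre x (vac C V)) = (x == y)%:R *: vac C V.
Proof. by rewrite -car cann_vac ccre0 add0r. Qed.

Lemma set1_eqE (T : finType) (x y : T) : ([set x] == [set y]) = (x == y).
Proof.
apply/eqP/eqP => [E|->//]; have := congr1 (fun A : {set T} => x \in A) E.
by rewrite !inE eqxx => /esym/eqP.
Qed.
Definition Fk (V : finType) (e : rel V) (v : V) (k : nat) (u : V) : int :=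
  \sum_(s : k.-tuple V | path e v s && (last v s == u)) (-1) ^+ k.

Arguments Fk {V}.
Lemma Fk0 (V : finType) (e : rel V) v u : Fk e v 0 u = (v == u)%:R.
Proof.
rewrite /Fk (eq_bigl (fun _ => v == u)); last first.
  by move=> s; rewrite (tuple0 s).
case: eqP => _; last by rewrite big_pred0.
by rewrite sumr_const card_tuple expn0 expr0.
Qed.

Lemma FkS (V : finType) (e : rel V) v k u :
  Fk e v k.+1 u = - \sum_(w | e w u) Fk e v k w.
Proof.
rewrite /Fk.
pose h (p : k.-tuple V * V) : k.+1.-tuple V := [tuple of rcons p.1 p.2].
pose g (t : k.+1.-tuple V) : k.-tuple V * V :=
  ([tuple of belast (thead t) (behead t)], last (thead t) (behead t)).
have hK : cancel h g.
  case=> s x; rewrite /g /h /=.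
  have := lastI (thead [tuple of rcons s x]) (behead [tuple of rcons s x]).
  rewrite -[_ :: _]/(tval [tuple of thead _ :: behead _]) -tuple_eta /= => E.
  case/rcons_inj: E => E1 E2.
  by congr pair; [apply: val_inj; rewrite /= -E1 | rewrite -E2].
have gK : cancel g h.
  move=> t; apply: val_inj; rewrite /h /g /= -lastI.
  symmetry; exact: (congr1 val (tuple_eta t)).
rewrite (@reindex int +%R 0 _ _ h) /=; last by exists g => ? _.
transitivity (\sum_(s : k.-tuple V | path e v s) \sum_(x | e (last v s) x && (x == u)) ((-1)^+k.+1 : int)).
  rewrite pair_big_dep /=; apply: eq_bigl; case=> s x /=.
  by rewrite rcons_path last_rcons andbA.
rewrite -sumrN [RHS](eq_bigr (fun w => \sum_(s : k.-tuple V | path e v s && (last v s == w)) - ((-1)^+k : int)));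
  last by move=> w _; rewrite sumrN.
rewrite [RHS](exchange_big_dep (fun s : k.-tuple V => path e v s)) /=; last by move=> w s _ /andP[].
apply: eq_bigr => s ps.
case E: (e (last v s) u); last first.
  rewrite !big_pred0 ?oppr0 //.
    by move=> w; case: eqP => [<-|]; rewrite ?E ?andbF ?andbT.
  by move=> x; case: eqP => [->|]; rewrite ?E ?andbF.
rewrite (big_pred1 u); last by move=> x /=; rewrite -[RHS]/(x == u); case: eqP => [->|]; rewrite ?E ?andbF.
rewrite (big_pred1 (last v s)); last by move=> w /=; rewrite -[RHS]/(w == last v s) [last v s == w]eq_sym; case: eqP => [->|]; rewrite ?E ?ps ?andbF.
by rewrite exprS mulN1r.
Qed.

Section Graph.
End Graph.

Lemma bl_le (V : finType) (L : nat) (Vl : 'I_L -> {set V}) bl (H : glued_cliques Vl bl)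
  m l : bl m \in Vl l -> (m <= l)%N.
Proof.
case: H => _ hb _ hnot _ hm; rewrite leqNgt; apply/negP => lt.
by have := hnot m l lt; rewrite hm.
Qed.

Lemma bl_inj (V : finType) (L : nat) (Vl : 'I_L -> {set V}) bl (H : glued_cliques Vl bl) :
  injective bl.
Proof.
move=> i j E; have hi := (proj2 (match H with And5 _ hb _ _ _ => hb i end)).
have hj := (proj2 (match H with And5 _ hb _ _ _ => hb j end)).
apply: ord_inj; apply/eqP; rewrite eqn_leq.
by rewrite (bl_le H (m := i) (l := j)) ?E // (bl_le H (m := j) (l := i)) -?E.
Qed.

Lemma dedge_bl (V : finType) (L : nat) (Vl : 'I_L -> {set V}) bl (H : glued_cliques Vl bl) w l :
  dedge Vl bl w (bl l) = (w \in Vl l) && (w != bl l).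
Proof.
apply/existsP/andP => [[l' /and3P [/eqP E hw hne]]|[hw hne]].
  by rewrite (bl_inj H E).
by exists l; rewrite eqxx hw hne.
Qed.

Lemma dedge_white (V : finType) (L : nat) (Vl : 'I_L -> {set V}) bl w u :
  u \in white bl -> dedge Vl bl w u = false.
Proof.
rewrite inE => /forallP hu; apply/existsP => [[l /and3P [E _ _]]].
by have := hu l; rewrite E.
Qed.

Lemma not_white (V : finType) (L : nat) (bl : 'I_L -> V) u :
  u \notin white bl -> exists l, u = bl l.
Proof. by rewrite inE negb_forall => /existsP [l /negPn/eqP ->]; exists l. Qed.

Definition rk (V : finType) (L : nat) (bl : 'I_L -> V) (u : V) : nat :=
  \max_(l : 'I_L | u == bl l) l.+1.

Lemma rk_white (V : finType) (L : nat) (bl : 'I_L -> V) u : u \in white bl -> rk bl u = 0%N.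
Proof.
rewrite inE => /forallP hu; rewrite /rk big_pred0 // => l; exact: negbTE (hu l).
Qed.

Lemma rk_bl (V : finType) (L : nat) (Vl : 'I_L -> {set V}) bl (H : glued_cliques Vl bl) l :
  rk bl (bl l) = l.+1.
Proof.
rewrite /rk (big_pred1 l) // => m /=; rewrite eq_sym; apply/eqP/eqP => [E|->//].
exact: (bl_inj H E).
Qed.

Lemma rk_le (V : finType) (L : nat) (Vl : 'I_L -> {set V}) bl (H : glued_cliques Vl bl) u :
  (rk bl u <= L)%N.
Proof.
case: (boolP (u \in white bl)) => [/rk_white -> //|/not_white [l ->]].
by rewrite (rk_bl H).
Qed.

Lemma dedge_rk (V : finType) (L : nat) (Vl : 'I_L -> {set V}) bl (H : glued_cliques Vl bl) w u :
  dedge Vl bl w u -> (rk bl w < rk bl u)%N.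
Proof.
case/existsP => l /and3P [/eqP -> hw hne]; rewrite (rk_bl H).
case: (boolP (w \in white bl)) => [/rk_white -> //|/not_white [m E]].
rewrite E (rk_bl H) ltnS ltn_neqAle (bl_le H (m := m) (l := l)) -?E // andbT.
by apply: contra hne => /eqP /ord_inj E'; rewrite E E'.
Qed.

Lemma path_rk (V : finType) (L : nat) (Vl : 'I_L -> {set V}) bl (H : glued_cliques Vl bl) v s :
  path (dedge Vl bl) v s -> (rk bl v + size s <= rk bl (last v s))%N.
Proof.
elim: s v => [|x s IH] v /=; first by rewrite addn0.
case/andP => hvx /IH; have := dedge_rk H hvx; lia.
Qed.

Lemma white_card (V : finType) (L : nat) (Vl : 'I_L -> {set V}) bl (H : glued_cliques Vl bl) :
  #|white bl| = (#|V| - L)%N.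
Proof.
have -> : white bl = ~: [set bl l | l in 'I_L].
  apply/setP => u; rewrite inE in_setC; apply/forallP/negP.
    by move=> h /imsetP [l _ E]; have := h l; rewrite E eqxx.
  by move=> h l; apply/eqP => E; apply: h; apply/imsetP; exists l.
rewrite -(cardsC [set bl l | l in 'I_L]) card_imset ?card_ord ?addKn //.
exact: bl_inj H.
Qed.

Lemma pathcoef_rec (V : finType) (L : nat) (Vl : 'I_L -> {set V}) bl (H : glued_cliques Vl bl) v u :
  v \in white bl ->
  pathcoef Vl bl v u = (v == u)%:R - \sum_(w | dedge Vl bl w u) pathcoef Vl bl v w.
Proof.
move=> vw.
have hn : (L < #|V|)%N.
  have := white_card H; have : (0 < #|white bl|)%N by apply/card_gt0P; exists v.
  lia.
have -> : forall x, pathcoef Vl bl v x = \sum_(k < #|V|) Fk (dedge Vl bl) v k x by [].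
move: hn; case E: #|V| => [//|n] hn.
rewrite big_ord_recl Fk0.
under eq_bigr do rewrite /bump /= FkS.
rewrite sumrN exchange_big /=; congr (_ - _); apply: eq_bigr => w hwu.
rewrite /pathcoef E big_ord_recr /= -/(Fk _ v _ w) [X in _ + X]big1 ?addr0 // => s /andP [ps /eqP ls].
have := path_rk H (s := rcons s u) (v := v).
rewrite rcons_path ps ls hwu last_rcons size_rcons size_tuple => /(_ isT).
have := rk_le H u; lia.
Qed.

Lemma pathcoef_white (V : finType) (L : nat) (Vl : 'I_L -> {set V}) bl (H : glued_cliques Vl bl) v u :
  v \in white bl -> u \in white bl -> pathcoef Vl bl v u = (v == u)%:R.
Proof.
move=> vw uw; rewrite (pathcoef_rec H) // big_pred0 ?subr0 // => w.
exact: dedge_white.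
Qed.

Lemma pathcoef_clique (V : finType) (L : nat) (Vl : 'I_L -> {set V}) bl (H : glued_cliques Vl bl) v l :
  v \in white bl -> \sum_(w in Vl l) pathcoef Vl bl v w = 0.
Proof.
move=> vw.
have hb : bl l \in Vl l by case: H => _ hb _ _ _; case: (hb l).
rewrite (bigD1 (bl l)) //= (pathcoef_rec H) //.
have -> : (v == bl l) = false.
  by apply/negbTE; move: vw; rewrite inE => /forallP.
rewrite sub0r (@eq_bigl _ _ _ _ _ (fun w => dedge Vl bl w (bl l)) (fun w => (w \in Vl l) && (w != bl l))); last by move=> w; exact: dedge_bl H w l.
exact: addNr.
Qed.

Lemma pathcoef_reach (V : finType) (L : nat) (Vl : 'I_L -> {set V}) bl v u :
  u \notin reach Vl bl v -> pathcoef Vl bl v u = 0.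
Proof.
move=> hu; apply: big1 => k _; apply: big1 => s /andP [ps /eqP ls].
case/negP: hu; rewrite inE; apply/connectP; exists s => //.
Qed.

Lemma acreE (C : numClosedFieldType) (V : finType) (L : nat) (Vl : 'I_L -> {set V}) bl v s
  (psi : fock C V) :
  acre Vl bl v s psi = \sum_u ((pathcoef Vl bl v u)%:~R : C) *: ccre (u, s) psi.
Proof.
rewrite /acre [RHS](bigID (fun u => u \in reach Vl bl v)) /= [X in _ + X]big1 ?addr0;
  last by move=> u /pathcoef_reach ->; rewrite scale0r.
by apply: eq_bigr => u _; rewrite conj_Creal ?realz.
Qed.

Lemma aannE (C : numClosedFieldType) (V : finType) (L : nat) (Vl : 'I_L -> {set V}) bl v s
  (psi : fock C V) :
  aann Vl bl v s psi = \sum_u ((pathcoef Vl bl v u)%:~R : C) *: cann (u, s) psi.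
Proof.
rewrite /aann [RHS](bigID (fun u => u \in reach Vl bl v)) /= [X in _ + X]big1 ?addr0 //.
by move=> u /pathcoef_reach ->; rewrite scale0r.
Qed.

Lemma intr_sum (C : numClosedFieldType) (I : Type) (r : seq I) (P : pred I) (F : I -> int) :
  ((\sum_(i <- r | P i) F i)%:~R : C) = \sum_(i <- r | P i) (F i)%:~R.
Proof. by apply: (big_morph _ (fun a b => intrD _ a b)). Qed.

Lemma part1 (C : numClosedFieldType) (V : finType) (L : nat) (Vl : 'I_L -> {set V}) bl
  (H : glued_cliques Vl bl) v s l (psi : fock C V) : v \in white bl ->
  anticomm (acre Vl bl v s) (bann Vl l s) psi = 0.
Proof.
move=> vw; rewrite /anticomm !acreE /bann.
under eq_bigr do rewrite ccre_sum.
under [X in _ + X]eq_bigr do rewrite cann_sum.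
under [X in _ + X]eq_bigr do under eq_bigr do rewrite cannZ.
rewrite [X in _ + X]exchange_big /= -big_split /=.
under eq_bigr do rewrite scaler_sumr -big_split /=.
under eq_bigr do under eq_bigr do rewrite -scalerDr car.
rewrite (eq_bigr (fun u => ((u \in Vl l)%:R * (pathcoef Vl bl v u)%:~R) *: psi)); last first.
  move=> u _; case: (boolP (u \in Vl l)) => hu.
    rewrite (bigD1 u) //= eqxx scale1r big1 ?addr0 ?mul1r // => w /andP [_ ne].
    by rewrite xpair_eqE eqxx andbT eq_sym (negbTE ne) scale0r scaler0.
  rewrite mul0r scale0r big1 // => w hw.
  have -> : ((u, s) == (w, s)) = false by rewrite xpair_eqE eqxx andbT; apply: contraNF hu => /eqP ->.
  by rewrite scale0r scaler0.
rewrite -scaler_suml.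
rewrite (eq_bigr (fun u => if u \in Vl l then ((pathcoef Vl bl v u)%:~R : C) else 0));
  last by move=> u _; case: ifP; rewrite ?mul1r ?mul0r.
by rewrite -big_mkcond /= -intr_sum (pathcoef_clique H) // scale0r.
Qed.

Lemma part2 (C : numClosedFieldType) (V : finType) (L : nat) (Vl : 'I_L -> {set V}) bl
  (H : glued_cliques Vl bl) u v s (psi : fock C V) : u \in white bl -> v \in white bl ->
  anticomm (ccre (u, s)) (aann Vl bl v s) psi = (u == v)%:R *: psi.
Proof.
move=> uw vw; rewrite /anticomm !aannE ccre_sum.
under eq_bigr do rewrite ccreZ.
rewrite -big_split /=.
under eq_bigr do rewrite -scalerDr car.
rewrite (bigD1 u) //= eqxx scale1r big1 ?addr0.
  by rewrite (pathcoef_white H) // eq_sym; case: eqP; rewrite ?scale1r ?scale0r.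
move=> w ne; rewrite xpair_eqE eqxx andbT eq_sym (negbTE ne) scale0r scaler0 //.
Qed.

Lemma comb_val (C : numClosedFieldType) (V : finType) s (k : V -> C) S :
  (\sum_u k u *: ccre (u, s) (vac C V)) S =
  \sum_u k u * (S == [set (u, s)])%:R.
Proof. by rewrite sum_ffunE; apply: eq_bigr => u _; rewrite ffunE e_val. Qed.

Lemma comb_val1 (C : numClosedFieldType) (V : finType) s (k : V -> C) w :
  (\sum_u k u *: ccre (u, s) (vac C V)) [set (w, s)] = k w.
Proof.
rewrite comb_val (bigD1 w) //= eqxx mulr1 big1 ?addr0 // => u ne.
by rewrite set1_eqE xpair_eqE eqxx andbT eq_sym (negbTE ne) mulr0.
Qed.

Lemma sector_comb (C : numClosedFieldType) (V : finType) s (k : V -> C) :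
  single_sector s (\sum_u k u *: ccre (u, s) (vac C V)).
Proof.
move=> S; rewrite comb_val => nz.
case: (pickP (fun u => S == [set (u, s)])) => [u /eqP E|none]; first by exists u.
by case/eqP: nz; apply: big1 => u _; rewrite none mulr0.
Qed.

Lemma decomp (C : numClosedFieldType) (V : finType) s (psi : fock C V) :
  single_sector s psi -> psi = \sum_u psi [set (u, s)] *: ccre (u, s) (vac C V).
Proof.
move=> sec; apply/ffunP => S; rewrite comb_val.
case: (pickP (fun u => S == [set (u, s)])) => [u /eqP E|none].
  rewrite E (bigD1 u) //= eqxx mulr1 big1 ?addr0 // => w ne.
  by rewrite set1_eqE xpair_eqE eqxx andbT eq_sym (negbTE ne) mulr0.
rewrite big1 => [|u _]; last by rewrite none mulr0.
apply/eqP; apply: contraT => nz; case: (sec S nz) => u E.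
by have := none u; rewrite E eqxx.
Qed.

Lemma bann_comb (C : numClosedFieldType) (V : finType) (L : nat) (Vl : 'I_L -> {set V}) l s s'
  (k : V -> C) :
  bann Vl l s' (\sum_u k u *: ccre (u, s) (vac C V)) =
  ((s' == s)%:R * \sum_(u in Vl l) k u) *: vac C V.
Proof.
rewrite /bann.
under eq_bigr do rewrite cann_sum.
under eq_bigr do under eq_bigr do rewrite cannZ cann_e scalerA.
under eq_bigr do rewrite -scaler_suml.
rewrite -scaler_suml; congr (_ *: _).
rewrite exchange_big /= big_distrr /= [RHS]big_mkcond /=.
apply: eq_bigr => u _.
case: (boolP (u \in Vl l)) => hu.
  rewrite (bigD1 u) //= big1 ?addr0.
    by rewrite xpair_eqE eqxx /= eq_sym; case: eqP; rewrite ?mulr1 ?mul1r ?mulr0 ?mul0r.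
  by move=> w /andP [_ ne]; rewrite xpair_eqE eq_sym (negbTE ne) mulr0.
rewrite big1 ?mulr0 // => w hw.
have -> : ((u, s) == (w, s')) = false.
  by rewrite xpair_eqE; apply/negbTE; apply: contraNN hu => /andP [/eqP -> _].
by rewrite mulr0.
Qed.

Lemma bcreZ (C : numClosedFieldType) (V : finType) (L : nat) (Vl : 'I_L -> {set V}) l s
  (a : C) (p : fock C V) : bcre Vl l s (a *: p) = a *: bcre Vl l s p.
Proof. by rewrite /bcre scaler_sumr; apply: eq_bigr => w _; rewrite ccreZ. Qed.

Lemma hop_comb (C : numClosedFieldType) (V : finType) (L : nat) (Vl : 'I_L -> {set V}) t s
  (k : V -> C) :
  hop Vl t (\sum_u k u *: ccre (u, s) (vac C V)) =
  t *: \sum_(l < L) (\sum_(u in Vl l) k u) *: \sum_(w in Vl l) ccre (w, s) (vac C V).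
Proof.
rewrite /hop; congr (t *: _); apply: eq_bigr => l _.
rewrite (bigD1 s) //= [X in _ + X = _]big1 ?addr0 => [|s' ne]; last first.
  by rewrite bann_comb bcreZ (negbTE ne) mul0r scale0r.
by rewrite bann_comb bcreZ eqxx mul1r.
Qed.

Lemma sum_e_val (C : numClosedFieldType) (V : finType) s (A : {set V}) w :
  (\sum_(w' in A) ccre (w', s) (vac C V)) [set (w, s)] = (w \in A)%:R.
Proof.
rewrite sum_ffunE; under eq_bigr do rewrite e_val set1_eqE xpair_eqE eqxx andbT.
case: (boolP (w \in A)) => hw.
  rewrite (bigD1 w) //= eqxx big1 ?addr0 // => u /andP [_ ne].
  by rewrite eq_sym (negbTE ne).
by rewrite big1 // => u hu; case: eqP => // E; rewrite E hu in hw.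
Qed.

Lemma pathcoef_bl (V : finType) (L : nat) (Vl : 'I_L -> {set V}) bl (H : glued_cliques Vl bl) v l :
  v \in white bl -> pathcoef Vl bl v (bl l) = - \sum_(w in Vl l | w != bl l) pathcoef Vl bl v w.
Proof.
move=> vw; have := pathcoef_clique H l vw.
have hb : bl l \in Vl l by case: H => _ hb _ _ _; case: (hb l).
by rewrite (bigD1 (bl l)) //= => /eqP; rewrite addr_eq0 => /eqP.
Qed.

Lemma spanning (C : numClosedFieldType) (V : finType) (L : nat) (Vl : 'I_L -> {set V})
  (bl : 'I_L -> V) (t : C) (H : glued_cliques Vl bl) (t0 : t != 0) s (psi : fock C V) :
  single_sector s psi -> hop Vl t psi = 0 ->
  psi = \sum_(v in white bl) psi [set (v, s)] *: acre Vl bl v s (vac C V).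
Proof.
move=> sec hpsi.
pose p u := psi [set (u, s)].
have Ep := decomp sec.
rewrite Ep hop_comb in hpsi.
pose m l := \sum_(u in Vl l) p u.
have hm : forall w, \sum_(l | w \in Vl l) m l = 0.
  move=> w; have := congr1 (fun f : fock C V => f [set (w, s)]) hpsi.
  rewrite /= ffunE sum_ffunE ffunE => /eqP; rewrite mulf_eq0 (negbTE t0) /= => /eqP.
  under eq_bigr do rewrite ffunE sum_e_val.
  move=> E; rewrite -[RHS]E big_mkcond /=; apply: eq_bigr => l _.
  by case: (w \in Vl l); rewrite /= ?scaler0 //; exact: (esym (mulr1 _)).
have hb : forall l, bl l \in Vl l by case: H => _ hb _ _ _ l; case: (hb l).
have mz : forall l, m l = 0.
  suff h : forall n (l : 'I_L), (L - n <= l)%N -> m l = 0 by move=> l; apply: (h L); lia.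
  elim=> [|n IH] l hl; first by have := ltn_ord l; lia.
  have := hm (bl l); rewrite (bigD1 l) //= big1 ?addr0 // => l' /andP [hin ne].
  apply: IH; have := bl_le H hin.
  have ne' : (l' : nat) != l by apply: contra ne => /eqP /ord_inj ->.
  lia.
rewrite {1}Ep.
under [RHS]eq_bigr do rewrite acreE scaler_sumr.
rewrite [RHS]exchange_big /=; apply: eq_bigr => u _.
under eq_bigr do rewrite scalerA.
rewrite -scaler_suml; congr (_ *: _).
pose q u := \sum_(v in white bl) p v * ((pathcoef Vl bl v u)%:~R : C).
suff h : forall n u, (rk bl u < n)%N -> q u = p u.
  by symmetry; exact: (h _ u (ltnSn _)).
elim=> [//|n IH] {}u hu.
case: (boolP (u \in white bl)) => [uw|/not_white [l El]].
  rewrite /q (bigD1 u) //= (pathcoef_white H) // eqxx mulr1 big1 ?addr0 // => v /andP [vw ne].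
  by rewrite (pathcoef_white H) // (negbTE ne) mulr0.
have e1 : q u = - \sum_(w in Vl l | w != bl l) q w.
  rewrite /q El; under eq_bigr => v vw do rewrite (pathcoef_bl H l vw) intrN intr_sum mulrN mulr_sumr.
  by rewrite sumrN exchange_big.
have e2 : p u = - \sum_(w in Vl l | w != bl l) p w.
  apply/eqP; rewrite -addr_eq0 El; apply/eqP.
  by have := mz l; rewrite /m (bigD1 (bl l)) ?hb.
rewrite e1 e2; congr (- _); apply: eq_bigr => w /andP [hw ne].
apply: IH; have := dedge_rk H (w := w) (u := bl l); rewrite (dedge_bl H) hw ne => /(_ isT).
rewrite (rk_bl H) => h1; move: hu; rewrite El (rk_bl H); lia.
Qed.

Theorem mainTheorem3 (C : numClosedFieldType) (V : finType) (L : nat)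
    (Vl : 'I_L -> {set V}) (bl : 'I_L -> V) (t : C) :
  glued_cliques Vl bl -> 0 < t ->
  [/\ (forall (v : V) (s : bool) (l : 'I_L) (psi : fock C V),
         v \in white bl ->
         anticomm (acre Vl bl v s) (bann Vl l s) psi = 0),
      (forall (u v : V) (s : bool) (psi : fock C V),
         u \in white bl -> v \in white bl ->
         anticomm (ccre (u, s)) (aann Vl bl v s) psi = (u == v)%:R *: psi),
      (forall s : bool,
         [/\ (forall v, v \in white bl ->
                single_sector s (acre Vl bl v s (vac C V)) /\
                hop Vl t (acre Vl bl v s (vac C V)) = 0),
             (forall k : V -> C,
                \sum_(v in white bl) k v *: acre Vl bl v s (vac C V) = 0 ->
                forall v, v \in white bl -> k v = 0) &
             (forall psi : fock C V,
                single_sector s psi -> hop Vl t psi = 0 ->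
                exists k : V -> C,
                  psi = \sum_(v in white bl) k v *: acre Vl bl v s (vac C V))])
    & #|white bl| = (#|V| - L)%N].
Proof.
move=> H tpos; have t0 : t != 0 by rewrite gt_eqF.
split.
- move=> v s l psi vw; exact: part1.
- move=> u v s psi uw vw; exact: part2.
- move=> s; split.
  + move=> v vw; rewrite acreE; split; first exact: sector_comb.
    rewrite hop_comb big1 ?scaler0 // => l _.
    by rewrite -intr_sum (pathcoef_clique H) // scale0r.
  + move=> k hk w ww; have := congr1 (fun f : fock C V => f [set (w, s)]) hk.
    rewrite /= sum_ffunE ffunE.
    under eq_bigr do rewrite ffunE acreE comb_val1.
    rewrite (bigD1 w) //= big1 ?addr0.
      by rewrite (pathcoef_white H) // eqxx => <-; exact: (esym (mulr1 _)).
    move=> v hv; have /andP [vw ne] := hv.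
    by rewrite (pathcoef_white H) // (negbTE ne) /= ?mulr0n ?mulr0z scaler0.
  + move=> psi sec hpsi; exists (fun v => psi [set (v, s)]); exact: (spanning H t0 sec hpsi).
- exact: (white_card H).
Qed.
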